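(* For all $x\in\left[0,\frac{\pi_{6/5,3/2}}{4}\right)$, $$\sin_{6/5,3/2}(2x)=(\Theta\circ\Phi\circ\Psi)(\cos_{6/5,3/2}x),$$ where $$\Theta(x)=\left(\frac{2x}{1+x}\right)^{2/3},\qquad \Phi(x)=\frac{8\sqrt{x(3x+1)^3(1-x)}}{16x+(3x+1)^3(1-x)},\qquad \Psi(x)=\frac{2x^{3/5}}{1+x^{6/5}}.$$
   Context: For $0<q<\infty$ and $\frac{q}{q+1}<p<\infty$: let $F_{p,q}(y)=\int_0^y (1-t^q)^{-1/p}\,dt$ for $y\in[0,1)$ and $\pi_{p,q}=2\int_0^1(1-t^q)^{-1/p}\,dt$. The function $\sin_{p,q}:[0,\pi_{p,q}/2)\to[0,1)$ is the inverse of $F_{p,q}$ and $\cos_{p,q}x=\frac{d}{dx}\sin_{p,q}x$. Here $(p,q)=(6/5,3/2)$, so $\pi_{6/5,3/2}=2\int_0^1(1-t^{3/2})^{-5/6}\,dt<\infty$. *)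

(* Defs.v *)
From Stdlib Require Import Reals ClassicalEpsilon.
From Coquelicot Require Import Coquelicot.
Open Scope R_scope.

(* Real power x^a for x >= 0, with the convention 0^a = 0 (used only for a > 0
   or with positive base). *)
Definition rpow (x a : R) : R := if Rle_dec x 0 then 0 else Rpower x a.

Definition integrand_pq (p q t : R) : R := rpow (1 - rpow t q) (- / p).

Definition F_pq (p q y : R) : R := RInt (integrand_pq p q) 0 y.

Definition pi_pq (p q : R) : R :=
  2 * RInt_gen (integrand_pq p q) (at_point 0) (at_left 1).

Definition sin_pq (p q x : R) : R :=
  epsilon (inhabits 0) (fun y => 0 <= y < 1 /\ F_pq p q y = x).

(* cos_{p,q} x = d/dx sin_{p,q} x; taken as the right derivative, so that it is
   also meaningful at the endpoint x = 0 of the domain [0, pi_{p,q}/2). *)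
Definition cos_pq (p q x : R) : R :=
  epsilon (inhabits 0) (fun l =>
    filterlim (fun h => (sin_pq p q (x + h) - sin_pq p q x) / h)
              (at_right 0) (locally l)).

Definition Theta (x : R) : R := rpow (2 * x / (1 + x)) (2 / 3).
Definition Phi (x : R) : R :=
  8 * sqrt (x * (3 * x + 1) ^ 3 * (1 - x)) / (16 * x + (3 * x + 1) ^ 3 * (1 - x)).
Definition Psi (x : R) : R := 2 * rpow x (3 / 5) / (1 + rpow x (6 / 5)).

(* Main.v *)
Require Import Defs.
From Stdlib Require Import Reals Lra Psatz ClassicalEpsilon.
From Coquelicot Require Import Coquelicot.
Open Scope R_scope.

Lemma rpow_pos x a : 0 < x -> rpow x a = Rpower x a.
Proof. intros H; unfold rpow; destruct (Rle_dec x 0); [lra|auto]. Qed.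
Lemma rpow_nonpos x a : x <= 0 -> rpow x a = 0.
Proof. intros H; unfold rpow; destruct (Rle_dec x 0); [auto|lra]. Qed.
Lemma rpow_gt0 x a : 0 < x -> 0 < rpow x a.
Proof. intros H; rewrite rpow_pos by auto; unfold Rpower; apply exp_pos. Qed.
Lemma rpow_ge0 x a : 0 <= rpow x a.
Proof. destruct (Rle_dec x 0). rewrite rpow_nonpos; lra. left; apply rpow_gt0; lra. Qed.

Lemma locally_pos x : 0 < x -> locally x (fun y => 0 < y).
Proof.
  intros H. exists (mkposreal x H). intros y Hy. cbn in Hy.
  unfold ball in Hy; cbn in Hy; unfold AbsRing_ball, abs, minus, plus, opp in Hy; cbn in Hy.
  apply Rabs_lt_between' in Hy. lra.
Qed.
Lemma locally_neg x : x < 0 -> locally x (fun y => y < 0).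
Proof.
  intros H. assert (H' : 0 < -x) by lra. exists (mkposreal _ H'). intros y Hy. cbn in Hy.
  unfold ball in Hy; cbn in Hy; unfold AbsRing_ball, abs, minus, plus, opp in Hy; cbn in Hy.
  apply Rabs_lt_between' in Hy. lra.
Qed.

Lemma is_derive_rpow x a : 0 < x -> is_derive (fun y => rpow y a) x (a * rpow x (a - 1)).
Proof.
  intros H. rewrite (rpow_pos x) by auto.
  apply is_derive_ext_loc with (fun y => Rpower y a).
  - generalize (locally_pos x H). apply filter_imp. intros y Hy. rewrite rpow_pos; auto.
  - apply is_derive_Reals. apply derivable_pt_lim_power. auto.
Qed.

Lemma continuous_rpow_pos x a : 0 < x -> continuous (fun y => rpow y a) x.
Proof. intros H. apply (@ex_derive_continuous R_AbsRing R_NormedModule). eexists. apply is_derive_rpow; auto. Qed.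

Lemma continuous_rpow_neg x a : x < 0 -> continuous (fun y => rpow y a) x.
Proof.
  intros H. apply continuous_ext_loc with (fun _ => 0).
  - generalize (locally_neg x H). apply filter_imp. intros y Hy. rewrite rpow_nonpos; lra.
  - apply continuous_const.
Qed.

Lemma continuous_rpow_0 a : 0 < a -> continuous (fun y => rpow y a) 0.
Proof.
  intros Ha. apply continuity_pt_filterlim. intros eps Heps. cbn in *.
  rewrite rpow_nonpos by lra.
  exists (Rpower eps (/a)). split. unfold Rpower; apply exp_pos.
  intros y [_ Hy]. unfold R_dist in *. rewrite Rminus_0_r in *.
  destruct (Rle_dec y 0). rewrite rpow_nonpos by lra. rewrite Rabs_R0; auto.
  rewrite rpow_pos by lra. rewrite Rabs_pos_eq in Hy by lra.
  rewrite Rabs_pos_eq by (left; unfold Rpower; apply exp_pos).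
  replace eps with (Rpower (Rpower eps (/a)) a).
  apply Rlt_Rpower_l; auto. split; lra.
  rewrite Rpower_mult. rewrite Rinv_l by lra. apply Rpower_1; auto.
Qed.

Lemma continuous_rpow a x : 0 < a -> continuous (fun y => rpow y a) x.
Proof.
  intros Ha. destruct (Rtotal_order x 0) as [H|[H|H]].
  apply continuous_rpow_neg; auto. subst; apply continuous_rpow_0; auto.
  apply continuous_rpow_pos; auto.
Qed.

Definition f := integrand_pq (6/5) (3/2).
Definition F y := RInt f 0 y.

Lemma rpow_lt1 t a : 0 < a -> t < 1 -> rpow t a < 1.
Proof.
  intros Ha Ht. destruct (Rle_dec t 0). rewrite rpow_nonpos; lra.
  rewrite rpow_pos by lra.
  replace 1 with (Rpower 1 a) by (unfold Rpower; rewrite ln_1, Rmult_0_r, exp_0; auto).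
  apply Rlt_Rpower_l; lra.
Qed.

Lemma f_base_pos t : t < 1 -> 0 < 1 - rpow t (3/2).
Proof. intros; generalize (rpow_lt1 t (3/2)); lra. Qed.

Lemma f_pos t : t < 1 -> 0 < f t.
Proof. intros; unfold f, integrand_pq; apply rpow_gt0, f_base_pos; auto. Qed.

Lemma f_cont t : t < 1 -> continuous f t.
Proof.
  intros Ht. unfold f, integrand_pq.
  apply (continuous_comp (fun t => 1 - rpow t (3/2)) (fun z => rpow z (-/(6/5)))).
  - apply (@continuous_minus R_UniformSpace R_AbsRing R_NormedModule (fun _ => 1) (fun t => rpow t (3/2))).
    apply continuous_const. apply continuous_rpow. lra.
  - apply continuous_rpow_pos, f_base_pos; auto.
Qed.

Lemma ex_RInt_f a b : a < 1 -> b < 1 -> ex_RInt f a b.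
Proof.
  intros Ha Hb. apply (@ex_RInt_continuous R_CompleteNormedModule). intros z Hz. apply f_cont.
  assert (Rmax a b < 1) by (apply Rmax_lub_lt; auto). lra.
Qed.

Lemma F_derive y : y < 1 -> is_derive F y (f y).
Proof.
  intros Hy. unfold F. apply (@is_derive_RInt R_CompleteNormedModule f (RInt f 0) 0).
  - assert (H : 0 < 1 - y) by lra. exists (mkposreal _ H). intros b Hb.
    unfold ball in Hb; cbn in Hb; unfold AbsRing_ball, abs, minus, plus, opp in Hb; cbn in Hb.
    apply Rabs_lt_between' in Hb. apply RInt_correct. apply ex_RInt_f; lra.
  - apply f_cont; auto.
Qed.

Lemma F_cont y : y < 1 -> continuity_pt F y.
Proof.
  intros Hy. apply continuity_pt_filterlim.
  apply (@ex_derive_continuous R_AbsRing R_NormedModule). eexists; apply F_derive; auto.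
Qed.

Lemma F_strict a b : a < b -> b < 1 -> F a < F b.
Proof.
  intros Hab Hb. destruct (MVT_gen F a b f) as [c [Hc Hm]].
  - intros x Hx. apply F_derive. rewrite Rmax_right in Hx; lra.
  - intros x Hx. apply F_cont. rewrite Rmax_right in Hx; lra.
  - rewrite Rmin_left, Rmax_right in Hc by lra.
    assert (0 < f c) by (apply f_pos; lra). nra.
Qed.

Lemma F_mono a b : a <= b -> b < 1 -> F a <= F b.
Proof. intros [H|H] Hb. left; apply F_strict; auto. subst; lra. Qed.

Lemma F_inj a b : a < 1 -> b < 1 -> F a = F b -> a = b.
Proof.
  intros Ha Hb H. destruct (Rtotal_order a b) as [h|[h|h]]; auto.
  apply F_strict in h; auto; lra. apply F_strict in h; auto; lra.
Qed.

Lemma F0 : F 0 = 0.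
Proof. unfold F. rewrite RInt_point. reflexivity. Qed.

Lemma rpow_rpow x a b : 0 <= x -> rpow (rpow x a) b = rpow x (a * b).
Proof.
  intros [H|H].
  - rewrite (rpow_pos x a) by auto. rewrite (rpow_pos (Rpower x a)) by (unfold Rpower; apply exp_pos).
    rewrite (rpow_pos x (a*b)) by auto. apply Rpower_mult.
  - subst. rewrite !(rpow_nonpos 0) by lra. reflexivity.
Qed.

Lemma rpow_1 x : 0 <= x -> rpow x 1 = x.
Proof. intros [H|H]. rewrite rpow_pos by auto; apply Rpower_1; auto. subst; apply rpow_nonpos; lra. Qed.

Lemma rpow_exp x a : 0 < x -> rpow x a = exp (a * ln x).
Proof. intros; rewrite rpow_pos; auto. Qed.

Lemma ln_div x y : 0 < x -> 0 < y -> ln (x / y) = ln x - ln y.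
Proof. intros; unfold Rdiv; rewrite ln_mult, ln_Rinv; try lra; apply Rinv_0_lt_compat; auto. Qed.

Lemma ln_pow' x n : 0 < x -> ln (x ^ n) = INR n * ln x.
Proof. apply ln_pow. Qed.

Lemma exp_mul_ln x : 0 < x -> x = exp (ln x).
Proof. intros; rewrite exp_ln; auto. Qed.

Definition q t := 4 * t / (1 + t) ^ 2.
Definition T t := rpow (q t) (2/3).
Definition g t := 8/3 * exp (-(1/3) * (ln 4 + ln t) - (2/3) * (ln (1 - t) + ln (1 + t))).

Lemma q_pos t : 0 < t -> 0 < q t.
Proof. intros; unfold q; apply Rdiv_lt_0_compat; [lra| apply pow_lt; lra]. Qed.

Lemma one_minus_q t : -1 < t -> 1 - q t = ((1 - t)/(1 + t))^2.
Proof. intros; unfold q; field; lra. Qed.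

Lemma q_lt1 t : 0 <= t < 1 -> q t < 1.
Proof.
  intros Ht. assert (0 < ((1 - t)/(1+t))^2).
  { apply pow_lt. apply Rdiv_lt_0_compat; lra. }
  rewrite <- one_minus_q in H by lra. lra.
Qed.

Lemma q_ge0 t : 0 <= t -> 0 <= q t.
Proof. intros [H|H]. left; apply q_pos; auto. subst; unfold q; lra. Qed.

Lemma T_ge0 t : 0 <= T t.
Proof. apply rpow_ge0. Qed.

Lemma T_lt1 t : 0 <= t < 1 -> T t < 1.
Proof. intros; apply rpow_lt1; [lra| apply q_lt1; auto]. Qed.

Lemma T0 : T 0 = 0.
Proof. unfold T, q. rewrite rpow_nonpos; lra. Qed.

Lemma rpow_T t : 0 <= t -> rpow (T t) (3/2) = q t.
Proof.
  intros. unfold T. rewrite rpow_rpow by (apply q_ge0; auto).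
  replace (2/3*(3/2)) with 1 by field. apply rpow_1, q_ge0; auto.
Qed.

Lemma q_derive t : 0 < t -> is_derive q t (4 * (1 - t) / (1 + t)^3).
Proof. intros. unfold q. auto_derive. nra. field; lra. Qed.

Lemma is_derive_eq (h : R -> R) x l l' : is_derive h x l -> l = l' -> is_derive h x l'.
Proof. intros H <-; auto. Qed.

Lemma T_derive t : 0 < t -> is_derive T t (2/3 * rpow (q t) (2/3 - 1) * (4 * (1 - t) / (1 + t)^3)).
Proof.
  intros Ht. unfold T.
  eapply is_derive_eq.
  apply (is_derive_comp (fun z => rpow z (2/3)) q t _ _ (is_derive_rpow (q t) (2/3) (q_pos t Ht)) (q_derive t Ht)).
  cbn. unfold mult; cbn. ring.
Qed.

Lemma ln_q t : 0 < t -> ln (q t) = ln 4 + ln t - 2 * ln (1 + t).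
Proof.
  intros. unfold q. rewrite ln_div by (try apply pow_lt; lra).
  rewrite ln_mult by lra. rewrite ln_pow by lra. simpl INR. ring.
Qed.

Lemma fT t : 0 <= t < 1 -> f (T t) = exp (-(5/6) * (2 * (ln (1 - t) - ln (1 + t)))).
Proof.
  intros Ht. unfold f, integrand_pq. rewrite rpow_T by lra. rewrite one_minus_q by lra.
  rewrite rpow_exp by (apply pow_lt, Rdiv_lt_0_compat; lra).
  rewrite ln_pow by (apply Rdiv_lt_0_compat; lra). rewrite ln_div by lra.
  f_equal. simpl INR. field.
Qed.

Lemma FT_derive t : 0 < t < 1 -> is_derive (fun t => F (T t)) t (g t).
Proof.
  intros Ht. eapply is_derive_eq.
  apply (is_derive_comp F T t _ _ (F_derive (T t) (T_lt1 t ltac:(lra))) (T_derive t ltac:(lra))).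
  cbn. unfold mult; cbn. rewrite fT by lra.
  rewrite rpow_exp by (apply q_pos; lra). rewrite ln_q by lra.
  change ((1 + t) * ((1 + t) * ((1 + t) * 1))) with ((1+t)^3).
  replace (4 * (1 - t) / (1 + t) ^ 3) with (4 * exp (ln (1 - t) - 3 * ln (1 + t))).
  2: { replace (ln (1 - t) - 3 * ln (1 + t)) with (ln (1 - t) + - (INR 3 * ln (1 + t))) by (simpl; ring). rewrite exp_plus, exp_ln by lra. rewrite <- ln_pow by lra.
       rewrite exp_Ropp, exp_ln by (apply pow_lt; lra). field. lra. }
  unfold g. match goal with |- ?a = ?b => change (@eq R a b) end.
  transitivity (8/3 * (exp ((2 / 3 - 1) * (ln 4 + ln t - 2 * ln (1 + t))) * exp (ln (1 - t) - 3 * ln (1 + t))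
     * exp (- (5 / 6) * (2 * (ln (1 - t) - ln (1 + t)))))). field.
  rewrite <- !exp_plus. f_equal. apply f_equal. field.
Qed.

Ltac pos := repeat (apply Rmult_lt_0_compat || apply Rdiv_lt_0_compat || apply Rinv_0_lt_compat || apply pow_lt || apply exp_pos); try nra.

Definition P n := n^2 * (2 - n^2)^3 / ((1 - n^2) * (1 + n^2)^3).
Definition rho n := sqrt (P n).
Definition dP n := 4 * n * (2 - n^2)^2 * (1 - 2 * n^2)^2 / ((1 - n^2)^2 * (1 + n^2)^4).

Lemma P_derive n : 2 * n^2 < 1 -> is_derive P n (dP n).
Proof.
  intros Hn. assert (0 <= n^2) by nra. unfold P, dP. auto_derive.
  - apply Rgt_not_eq. repeat (apply Rmult_lt_0_compat || nra).
  - field. repeat split; intro; nra.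
Qed.

Lemma one_minus_P n : n^2 < 1 -> 1 - P n = (1 - 2 * n^2)^3 / ((1 - n^2) * (1 + n^2)^3).
Proof. intros. unfold P. field. repeat split; try apply pow_nonzero; intro; nra. Qed.

Lemma P_ge0 n : 2 * n^2 <= 1 -> 0 <= P n.
Proof.
  intros. unfold P. apply Rmult_le_pos. apply Rmult_le_pos. nra. apply pow_le; nra.
  left; apply Rinv_0_lt_compat, Rmult_lt_0_compat. nra. apply pow_lt; nra.
Qed.

Lemma P_pos n : 0 < n -> 2 * n^2 < 1 -> 0 < P n.
Proof.
  intros. unfold P. apply Rdiv_lt_0_compat. apply Rmult_lt_0_compat. nra. apply pow_lt; nra.
  apply Rmult_lt_0_compat. nra. apply pow_lt; nra.
Qed.

Lemma P_lt1 n : 2 * n^2 < 1 -> P n < 1.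
Proof.
  intros. assert (0 < 1 - P n); [|lra]. rewrite one_minus_P by nra.
  apply Rdiv_lt_0_compat. apply pow_lt; nra. apply Rmult_lt_0_compat. nra. apply pow_lt; nra.
Qed.

Lemma rho_ge0 n : 0 <= rho n.
Proof. apply sqrt_pos. Qed.

Lemma rho_lt1 n : 2 * n^2 < 1 -> rho n < 1.
Proof.
  intros. unfold rho. rewrite <- sqrt_1. apply sqrt_lt_1. apply P_ge0; lra. lra. apply P_lt1; auto.
Qed.

Lemma rho_pos n : 0 < n -> 2 * n^2 < 1 -> 0 < rho n.
Proof. intros; apply sqrt_lt_R0, P_pos; auto. Qed.

Lemma rho_derive n : 0 < n -> 2 * n^2 < 1 -> is_derive rho n (dP n / (2 * rho n)).
Proof.
  intros H1 H2. unfold rho. eapply is_derive_eq.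
  apply (is_derive_comp sqrt P n _ _ (proj2 (is_derive_Reals _ _ _) (derivable_pt_lim_sqrt _ (P_pos n H1 H2))) (P_derive n H2)).
  cbn. unfold mult; cbn. field. apply Rgt_not_eq, sqrt_lt_R0, P_pos; auto.
Qed.

Lemma ln_P n : 0 < n -> 2 * n^2 < 1 ->
  ln (P n) = 2 * ln n + 3 * ln (2 - n^2) - ln (1 - n^2) - 3 * ln (1 + n^2).
Proof.
  intros. unfold P. rewrite ln_div. rewrite !ln_mult. rewrite !ln_pow. simpl INR. ring.
  all: pos.
Qed.

Lemma ln_1mP n : 0 < n -> 2 * n^2 < 1 ->
  ln (1 - P n) = 3 * ln (1 - 2 * n^2) - ln (1 - n^2) - 3 * ln (1 + n^2).
Proof.
  intros. rewrite one_minus_P by nra. rewrite ln_div. rewrite !ln_mult. rewrite !ln_pow. simpl INR. ring.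
  all: pos.
Qed.

Lemma dP_exp n : 0 < n -> 2 * n^2 < 1 ->
  dP n = 4 * exp (ln n + 2 * ln (2 - n^2) + 2 * ln (1 - 2 * n^2) - 2 * ln (1 - n^2) - 4 * ln (1 + n^2)).
Proof.
  intros. assert (E : dP n = 4 * (n * (2 - n^2)^2 * (1 - 2 * n^2)^2 / ((1 - n^2)^2 * (1 + n^2)^4))).
  { unfold dP. field. repeat split; try apply pow_nonzero; intro; nra. }
  rewrite E. f_equal. rewrite <- (exp_ln (n * _ * _ / _)). f_equal.
  rewrite ln_div. rewrite !ln_mult. rewrite !ln_pow. simpl INR. ring.
  all: pos.
Qed.

Lemma ln_1mn2 n : -1 < n < 1 -> ln (1 - n^2) = ln (1 - n) + ln (1 + n).
Proof. intros. rewrite <- ln_mult by lra. f_equal. ring. Qed.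

Lemma key n : 0 < n -> 2 * n^2 < 1 -> g (rho n) * (dP n / (2 * rho n)) = 2 * g n.
Proof.
  intros H1 H2. assert (Hn1 : n < 1) by nra.
  assert (Hr : rho n = exp (/2 * ln (P n))).
  { unfold rho. rewrite <- Rpower_sqrt by (apply P_pos; auto). reflexivity. }
  assert (Hr1 : ln (1 - rho n) + ln (1 + rho n) = ln (1 - P n)).
  { rewrite <- ln_mult. f_equal. unfold rho.
    replace ((1 - sqrt (P n)) * (1 + sqrt (P n))) with (1 - sqrt (P n) * sqrt (P n)) by ring.
    rewrite sqrt_sqrt; auto. apply P_ge0; lra.
    generalize (rho_lt1 n H2); unfold rho; lra. generalize (rho_ge0 n); unfold rho; lra. }
  unfold g. rewrite Hr1. rewrite (Hr) at 2. rewrite Hr. rewrite ln_exp.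
  rewrite dP_exp by auto. rewrite ln_1mP by auto. rewrite ln_P by auto.
  rewrite <- ln_1mn2 by lra.
  transitivity (16/3 * (exp (- (1 / 3) * (ln 4 + / 2 * (2 * ln n + 3 * ln (2 - n ^ 2) - ln (1 - n ^ 2) - 3 * ln (1 + n ^ 2)))
     - 2 / 3 * (3 * ln (1 - 2 * n ^ 2) - ln (1 - n ^ 2) - 3 * ln (1 + n ^ 2)))
    * exp (ln n + 2 * ln (2 - n ^ 2) + 2 * ln (1 - 2 * n ^ 2) - 2 * ln (1 - n ^ 2) - 4 * ln (1 + n ^ 2))
    * exp (- (/ 2 * (2 * ln n + 3 * ln (2 - n ^ 2) - ln (1 - n ^ 2) - 3 * ln (1 + n ^ 2)))))).
  { rewrite exp_Ropp. field. apply Rgt_not_eq, exp_pos. }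
  rewrite <- !exp_plus. replace (2 * (8/3 * exp (- (1 / 3) * (ln 4 + ln n) - 2 / 3 * ln (1 - n ^ 2))))
   with (16/3 * exp (- (1 / 3) * (ln 4 + ln n) - 2 / 3 * ln (1 - n ^ 2))) by field.
  f_equal. apply f_equal. field.
Qed.

Lemma q_cont t : -1 < t -> continuous q t.
Proof.
  intros. apply (@ex_derive_continuous R_AbsRing R_NormedModule).
  unfold q. auto_derive. intro; nra.
Qed.

Lemma T_cont t : -1 < t -> continuous T t.
Proof.
  intros. unfold T. apply (continuous_comp q (fun z => rpow z (2/3))).
  apply q_cont; auto. apply continuous_rpow; lra.
Qed.

Lemma T_nonpos t : -1 < t <= 0 -> T t = 0.
Proof.
  intros. unfold T. apply rpow_nonpos. unfold q, Rdiv.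
  assert (0 < / (1+t)^2) by (apply Rinv_0_lt_compat, pow_lt; lra). nra.
Qed.

Lemma T_lt1' t : -1 < t < 1 -> T t < 1.
Proof.
  intros. destruct (Rle_dec t 0). rewrite T_nonpos; lra. apply T_lt1; lra.
Qed.

Lemma FT_cont t : -1 < t < 1 -> continuity_pt (fun t => F (T t)) t.
Proof.
  intros. apply continuity_pt_filterlim.
  apply (continuous_comp T F). apply T_cont; lra.
  apply continuity_pt_filterlim, F_cont, T_lt1'; auto.
Qed.

Lemma P_cont n : n^2 < 1 -> continuous P n.
Proof.
  intros. apply (@ex_derive_continuous R_AbsRing R_NormedModule).
  unfold P. auto_derive. apply Rgt_not_eq. apply Rmult_lt_0_compat. nra.
  repeat (apply Rmult_lt_0_compat || nra).
Qed.

Lemma rho_cont n : 2 * n^2 <= 1 -> continuous rho n.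
Proof.
  intros. unfold rho. apply (continuous_comp P sqrt). apply P_cont; nra.
  apply continuity_pt_filterlim, continuity_pt_sqrt, P_ge0; auto.
Qed.

Lemma rho0 : rho 0 = 0.
Proof. unfold rho. replace (P 0) with 0. apply sqrt_0. unfold P. simpl. unfold Rdiv. rewrite !Rmult_0_l. reflexivity. Qed.

Lemma doubling n : 0 <= n -> 2 * n^2 < 1 -> F (T (rho n)) = 2 * F (T n).
Proof.
  intros H0 H1. destruct H0 as [H0|H0]; [|subst; rewrite rho0, T0, F0; lra].
  set (h := fun n => F (T (rho n)) - 2 * F (T n)).
  assert (Hh : h n - h 0 = 0).
  { destruct (MVT_gen h 0 n (fun _ => 0)) as [c [Hc Hm]].
    - intros x Hx. rewrite Rmin_left, Rmax_right in Hx by lra.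
      assert (2 * x^2 < 1) by nra.
      unfold h. eapply is_derive_eq.
      apply (@is_derive_minus R_AbsRing R_NormedModule).
      apply (is_derive_comp (fun t => F (T t)) rho x).
      apply FT_derive. split. apply rho_pos; lra. apply rho_lt1; auto.
      apply rho_derive; lra.
      apply (is_derive_scal (fun t => F (T t)) x 2 (g x)).
      apply FT_derive. nra.
      cbn. unfold mult, minus, plus, opp; cbn. rewrite Rmult_comm, key by lra. ring.
    - intros x Hx. rewrite Rmin_left, Rmax_right in Hx by lra.
      assert (2 * x^2 < 1) by nra. unfold h.
      apply (continuity_pt_minus (fun n => F (T (rho n))) (fun n => 2 * F (T n))).
      + apply continuity_pt_filterlim. apply (continuous_comp rho (fun t => F (T t))).
        apply rho_cont; lra. apply continuity_pt_filterlim, FT_cont.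
        split. generalize (rho_ge0 x); lra. apply rho_lt1; auto.
      + apply (continuity_pt_scal (fun t => F (T t))). apply FT_cont. nra.
    - rewrite Hm; ring. }
  unfold h in Hh. rewrite rho0, T0, F0 in Hh. lra.
Qed.

Definition n0 := sqrt (/2).
Lemma n0_sq : n0 ^ 2 = /2.
Proof. unfold n0. simpl. rewrite Rmult_1_r. apply sqrt_sqrt. lra. Qed.
Lemma n0_pos : 0 < n0.
Proof. apply sqrt_lt_R0; lra. Qed.
Lemma n0_lt1 : n0 < 1.
Proof. generalize n0_sq n0_pos; intros; nra. Qed.

Definition x1 := F (T n0).

Lemma q_mono a b : 0 <= a -> a <= b -> b <= 1 -> q a <= q b.
Proof.
  intros. assert (E : q b - q a = 4 * (b - a) * (1 - a * b) / ((1 + a)^2 * (1 + b)^2)).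
  { unfold q. field. split; lra. }
  assert (0 <= 4 * (b - a) * (1 - a * b) / ((1 + a)^2 * (1 + b)^2)); [|lra].
  apply Rmult_le_pos. apply Rmult_le_pos; nra. left; apply Rinv_0_lt_compat.
  apply Rmult_lt_0_compat; apply pow_lt; lra.
Qed.

Lemma T_mono a b : 0 <= a -> a <= b -> b <= 1 -> T a <= T b.
Proof.
  intros. destruct H as [H|H].
  - unfold T. rewrite (rpow_pos (q a)) by (apply q_pos; lra). rewrite (rpow_pos (q b)) by (apply q_pos; lra).
    apply Rle_Rpower_l. lra. split. apply q_pos; auto. apply q_mono; lra.
  - subst. rewrite T0. apply T_ge0.
Qed.

Lemma rho_n0 : rho n0 = 1.
Proof.
  unfold rho. replace (P n0) with 1. apply sqrt_1.
  unfold P. rewrite n0_sq. field.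
Qed.

Lemma T1 : T 1 = 1.
Proof. unfold T. replace (q 1) with 1 by (unfold q; field). rewrite rpow_pos by lra.
  unfold Rpower. rewrite ln_1, Rmult_0_r. apply exp_0. Qed.

Lemma F_bound y : 0 <= y < 1 -> F y <= 2 * x1.
Proof.
  intros Hy.
  assert (Hc : continuous (fun n => T (rho n)) n0).
  { apply (continuous_comp rho T). apply rho_cont. rewrite n0_sq; lra.
    rewrite rho_n0. apply T_cont; lra. }
  assert (He : 0 < 1 - y) by lra.
  destruct (proj1 (filterlim_locally _ _) Hc (mkposreal _ He)) as [d Hd].
  set (n := n0 - Rmin d n0 / 2).
  assert (Hmin : 0 < Rmin d n0 <= n0).
  { split. apply Rmin_pos. apply cond_pos. apply n0_pos. apply Rmin_r. }
  assert (Hn : 0 < n < n0) by (unfold n; lra).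
  assert (Hn2 : 2 * n^2 < 1).
  { generalize n0_sq; intros. nra. }
  assert (Hb : ball n0 d n).
  { unfold ball; cbn; unfold AbsRing_ball, abs, minus, plus, opp; cbn.
    unfold n. rewrite Rabs_left. generalize (Rmin_l d n0); intros. lra.
    lra. }
  specialize (Hd n Hb). 
  unfold ball in Hd; cbn in Hd; unfold AbsRing_ball, abs, minus, plus, opp in Hd; cbn in Hd.
  rewrite rho_n0, T1 in Hd. apply Rabs_lt_between' in Hd. simpl in Hd.
  assert (Hr : 0 <= rho n < 1) by (split; [apply rho_ge0| apply rho_lt1; auto]).
  assert (HT : T (rho n) < 1) by (apply T_lt1; auto).
  apply Rle_trans with (F (T (rho n))).
  clearbody n. apply F_mono.
  lra. lra.
  rewrite (doubling n (Rlt_le _ _ (proj1 Hn)) Hn2). apply Rmult_le_compat_l. lra.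
  unfold x1. generalize n0_pos n0_lt1; intros. apply F_mono. apply T_mono; lra. apply T_lt1. lra.
Qed.

Definition EF z := exists y, 0 <= y < 1 /\ z = F y.

Lemma EF_bound : bound EF.
Proof. exists (2 * x1). intros z [y [Hy ->]]. apply F_bound; auto. Qed.
Lemma EF_ne : exists z, EF z.
Proof. exists (F 0). exists 0. split; [lra|auto]. Qed.

Definition M := proj1_sig (completeness EF EF_bound EF_ne).
Lemma M_lub : is_lub EF M.
Proof. unfold M. destruct (completeness EF EF_bound EF_ne); auto. Qed.

Lemma M_le : M <= 2 * x1.
Proof. apply (proj2 M_lub). intros z [y [Hy ->]]. apply F_bound; auto. Qed.

Lemma F_le_M y : 0 <= y < 1 -> F y <= M.
Proof. intros. apply (proj1 M_lub). exists y; auto. Qed.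

Lemma M_approx eps : 0 < eps -> exists y, 0 <= y < 1 /\ M - eps < F y.
Proof.
  intros He. destruct (Classical_Prop.classic (exists y, 0 <= y < 1 /\ M - eps < F y)) as [H|H]; auto.
  exfalso. assert (M <= M - eps); [|lra].
  apply (proj2 M_lub). intros z [y [Hy ->]].
  destruct (Rle_dec (F y) (M - eps)); auto. exfalso; apply H. exists y; split; auto; lra.
Qed.

Lemma is_RInt_gen_M : is_RInt_gen f (at_point 0) (at_left 1) M.
Proof.
  intros Pr [eps Heps].
  destruct (M_approx eps (cond_pos eps)) as [y1 [Hy1 Hy1']].
  apply Filter_prod with (fun a => a = 0) (fun b => y1 < b < 1).
  - reflexivity.
  - assert (H : 0 < 1 - y1) by lra. exists (mkposreal _ H). intros b Hb Hb1.
    unfold ball in Hb; cbn in Hb; unfold AbsRing_ball, abs, minus, plus, opp in Hb; cbn in Hb.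
    apply Rabs_lt_between' in Hb. lra.
  - intros a b -> Hb. cbn [fst snd]. exists (F b). split.
    + apply (@RInt_correct R_CompleteNormedModule). apply ex_RInt_f; lra.
    + apply Heps. change (Rabs (F b - M) < eps).
      apply Rabs_lt_between'. split.
      * generalize (F_mono y1 b ltac:(lra) ltac:(lra)); lra.
      * generalize (F_le_M b ltac:(lra)) (cond_pos eps); lra.
Qed.

Lemma pi_M : pi_pq (6/5) (3/2) = 2 * M.
Proof.
  unfold pi_pq. f_equal. apply (@is_RInt_gen_unique R_CompleteNormedModule).
  apply Proper_StrongProper, at_point_filter. apply Proper_StrongProper, at_left_proper_filter. apply is_RInt_gen_M.
Qed.

Lemma sin_val z y : 0 <= y < 1 -> F y = z -> sin_pq (6/5) (3/2) z = y.
Proof.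
  intros Hy Hz. unfold sin_pq.
  set (Pp := fun y => 0 <= y < 1 /\ F_pq (6/5) (3/2) y = z).
  assert (Hex : exists y, Pp y) by (exists y; split; auto).
  destruct (epsilon_spec (inhabits 0) Pp Hex) as [H1 H2].
  apply F_inj; try lra. unfold F_pq in H2. unfold F, f. rewrite H2. auto.
Qed.

Lemma Tn0_pos : 0 < T n0.
Proof. apply rpow_gt0, q_pos, n0_pos. Qed.
Lemma Tn0_lt1 : T n0 < 1.
Proof. apply T_lt1. generalize n0_pos n0_lt1; lra. Qed.

Lemma sin_ex z : 0 <= z <= x1 -> exists y, 0 <= y <= T n0 /\ F y = z.
Proof.
  intros Hz. generalize Tn0_pos Tn0_lt1; intros.
  destruct (Req_dec z 0) as [->|Hz0]. exists 0; split. lra. apply F0.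
  destruct (Req_dec z x1) as [->|Hz1]. exists (T n0); split. lra. reflexivity.
  destruct (Ranalysis5.IVT_interv (fun y => F y - z) 0 (T n0)) as [y [Hy Hy']].
  - intros a Ha. apply continuity_pt_minus. apply F_cont; lra. apply continuity_pt_const. intros u v; auto.
  - auto.
  - rewrite F0; lra.
  - unfold x1 in *; lra.
  - exists y; split; auto; lra.
Qed.

Lemma sin_spec z : 0 <= z <= x1 -> 0 <= sin_pq (6/5) (3/2) z <= T n0 /\ F (sin_pq (6/5) (3/2) z) = z.
Proof.
  intros Hz. destruct (sin_ex z Hz) as [y [Hy Hy']].
  rewrite (sin_val z y); auto. generalize Tn0_lt1; lra.
Qed.

Lemma cos_lim x : 0 <= x < x1 ->
  filterlim (fun h => (sin_pq (6/5) (3/2) (x + h) - sin_pq (6/5) (3/2) x) / h)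
    (at_right 0) (locally (/ f (sin_pq (6/5) (3/2) x))).
Proof.
  intros Hx. destruct (sin_spec x ltac:(lra)) as [HS HFS].
  set (S := sin_pq (6/5) (3/2) x) in *.
  generalize Tn0_lt1; intros HT.
  set (d := f S). assert (Hd : 0 < d) by (apply f_pos; lra).
  apply filterlim_locally. intros eps.
  set (e' := Rmin (d/2) (eps * d * d / 2)).
  assert (He' : 0 < e').
  { apply Rmin_pos. lra. generalize (cond_pos eps); intros. 
    apply Rmult_lt_0_compat; [|lra]. apply Rmult_lt_0_compat; [apply Rmult_lt_0_compat|]; lra. }
  destruct (proj1 (is_derive_Reals F S d) (F_derive S ltac:(lra)) e' He') as [dl Hdl].
  set (d2 := Rmin (dl/2) ((1 - S)/2)).
  assert (Hd2 : 0 < d2) by (apply Rmin_pos; generalize (cond_pos dl); lra).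
  assert (Hd2' : d2 <= dl/2) by apply Rmin_l.
  assert (Hd2'' : d2 <= (1 - S)/2) by apply Rmin_r.
  assert (HF2 : x < F (S + d2)) by (rewrite <- HFS; apply F_strict; lra).
  set (eta := Rmin (x1 - x) (F (S + d2) - x)).
  assert (Heta : 0 < eta) by (apply Rmin_pos; lra).
  exists (mkposreal eta Heta). intros h Hh Hpos. change R in h. cbn in Hpos.
  change (Rabs (h - 0) < eta) in Hh. rewrite Rminus_0_r, Rabs_pos_eq in Hh by lra.
  assert (Hh1 : h < x1 - x) by (generalize (Rmin_l (x1 - x) (F (S + d2) - x)); unfold eta in Hh; lra).
  assert (Hh2 : h < F (S + d2) - x) by (generalize (Rmin_r (x1 - x) (F (S + d2) - x)); unfold eta in Hh; lra).
  destruct (sin_spec (x + h) ltac:(lra)) as [Hy Hy'].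
  set (y := sin_pq (6/5) (3/2) (x + h)) in *.
  change (Rabs ((y - S) / h - / d) < eps).
  assert (HyS : S < y).
  { destruct (Rlt_le_dec S y); auto. generalize (F_mono y S r ltac:(lra)); lra. }
  assert (HyS2 : y < S + d2).
  { destruct (Rlt_le_dec y (S + d2)); auto. generalize (F_mono (S + d2) y r ltac:(lra)); lra. }
  set (k := y - S).
  assert (Hk : 0 < k < dl) by (unfold k; lra).
  specialize (Hdl k ltac:(lra) ltac:(rewrite Rabs_pos_eq; lra)).
  unfold k in Hdl at 1. rewrite Rplus_minus in Hdl. fold k in Hdl.
  rewrite Hy', HFS in Hdl. replace (x + h - x) with h in Hdl by ring.
  set (r := h / k) in *.
  assert (Hr : 0 < r) by (unfold r; apply Rdiv_lt_0_compat; lra).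
  replace (k / h) with (/ r) by (unfold r; field; lra).
  replace (/ r - / d) with ((d - r) / (r * d)) by (field; lra).
  unfold Rdiv. rewrite Rabs_mult, Rabs_inv, (Rabs_pos_eq (r * d)) by nra.
  assert (He1 : e' <= d / 2) by apply Rmin_l.
  assert (He2 : e' <= eps * d * d / 2) by apply Rmin_r.
  apply Rabs_lt_between' in Hdl.
  assert (Hr2 : d / 2 < r) by lra.
  assert (Hrd : 0 < r * d) by nra.
  apply (Rmult_lt_reg_r (r * d)); auto. rewrite Rmult_assoc, Rinv_l, Rmult_1_r by lra.
  assert (eps * d * (r - d/2) > 0).
  { generalize (cond_pos eps); intros. apply Rmult_gt_0_compat; [nra|lra]. }
  rewrite Rabs_minus_sym. apply Rabs_def1; nra.
Qed.

Lemma cos_val x : 0 <= x < x1 -> cos_pq (6/5) (3/2) x = / f (sin_pq (6/5) (3/2) x).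
Proof.
  intros Hx. unfold cos_pq.
  set (Pp := fun l => filterlim (fun h => (sin_pq (6/5) (3/2) (x + h) - sin_pq (6/5) (3/2) x) / h)
              (at_right 0) (locally l)).
  assert (Hex : exists l, Pp l) by (eexists; apply cos_lim; auto).
  generalize (epsilon_spec (inhabits 0) Pp Hex). intros H.
  apply (filterlim_locally_unique _ _ _ H (cos_lim x Hx)).
Qed.

Lemma inv_f S : S < 1 -> / f S = rpow (1 - rpow S (3/2)) (5/6).
Proof.
  intros HS. unfold f, integrand_pq. generalize (f_base_pos S HS); intros Hw.
  rewrite (rpow_exp _ (-/(6/5))), (rpow_exp _ (5/6)) by auto. rewrite <- exp_Ropp. f_equal. field.
Qed.

Lemma Psi_val w : 0 < w -> Psi (rpow w (5/6)) = 2 * sqrt w / (1 + w).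
Proof.
  intros Hw. unfold Psi. rewrite !rpow_rpow by lra.
  replace (5/6 * (3/5)) with (/2) by field. replace (5/6 * (6/5)) with 1 by field.
  rewrite rpow_1 by lra. rewrite rpow_pos by lra. rewrite Rpower_sqrt by lra. reflexivity.
Qed.

Lemma Phi_val n : 0 <= n -> 2 * n^2 < 1 ->
  Phi ((1 - n^2)/(1 + n^2)) = 2 * rho n / (1 + rho n ^ 2).
Proof.
  intros H0 H1. set (a := (1 - n^2)/(1 + n^2)).
  set (K := 4 * (1 - n^2)/(1 + n^2)).
  assert (HK : 0 <= K) by (unfold K; apply Rmult_le_pos; [nra| left; apply Rinv_0_lt_compat; nra]).
  assert (HX : a * (3 * a + 1)^3 * (1 - a) = (K * K) * P n).
  { unfold a, K, P. field. repeat split; try apply pow_nonzero; intro; nra. }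
  unfold Phi. fold a. rewrite HX. rewrite sqrt_mult by (try apply P_ge0; nra).
  rewrite sqrt_square by auto. fold (rho n).
  assert (Hr2 : rho n ^ 2 = P n) by (unfold rho; simpl; rewrite Rmult_1_r; apply sqrt_sqrt, P_ge0; lra).
  rewrite Hr2.
  assert (HY : 16 * a + (3 * a + 1)^3 * (1 - a) = 4 * K * (1 + P n)).
  { unfold a, K, P. field. repeat split; try apply pow_nonzero; intro; nra. }
  rewrite HY. assert (0 < K).
  { unfold K. apply Rmult_lt_0_compat; [nra| apply Rinv_0_lt_compat; nra]. }
  assert (0 <= P n) by (apply P_ge0; lra).
  field. split; lra.
Qed.

Lemma Theta_val r : 0 <= r -> Theta (2 * r / (1 + r^2)) = T r.
Proof.
  intros Hr. unfold Theta, T. f_equal. unfold q. field. split; nra.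
Qed.

Theorem theorem4p4 (x : R) :
  0 <= x < pi_pq (6 / 5) (3 / 2) / 4 ->
  sin_pq (6 / 5) (3 / 2) (2 * x) =
  Theta (Phi (Psi (cos_pq (6 / 5) (3 / 2) x))).
Proof.
  intros Hx. rewrite pi_M in Hx. generalize M_le; intros HM.
  assert (Hx1 : 0 <= x < x1) by lra.
  destruct (sin_spec x ltac:(lra)) as [HS HFS].
  set (S := sin_pq (6/5) (3/2) x) in *.
  generalize Tn0_lt1 Tn0_pos n0_pos n0_lt1 n0_sq; intros HT1 HT0 Hn0 Hn01 Hn0sq.
  assert (HS2 : S < T n0).
  { destruct HS as [_ [H|H]]; auto. exfalso. rewrite H in HFS. unfold x1 in Hx1. lra. }
  rewrite cos_val by auto. fold S. rewrite inv_f by lra.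
  set (w := 1 - rpow S (3/2)).
  assert (Hw : 0 < w) by (apply f_base_pos; lra).
  assert (Hw1 : w <= 1) by (unfold w; generalize (rpow_ge0 S (3/2)); lra).
  rewrite Psi_val by auto.
  set (c := sqrt w).
  assert (Hc : 0 < c) by (apply sqrt_lt_R0; auto).
  assert (Hcw : c * c = w) by (apply sqrt_sqrt; lra).
  assert (Hc1 : c <= 1) by nra.
  set (n := (1 - c) / (1 + c)).
  assert (Hn : 0 <= n < 1).
  { unfold n. split. apply Rmult_le_pos. lra. left; apply Rinv_0_lt_compat; lra.
    apply (Rmult_lt_reg_r (1 + c)). lra. unfold Rdiv. rewrite Rmult_assoc, Rinv_l; lra. }
  assert (Hqn : q n = rpow S (3/2)).
  { unfold q, n. replace (rpow S (3/2)) with (1 - c * c) by (rewrite Hcw; unfold w; ring).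
    field. lra. }
  assert (HTn : T n = S).
  { unfold T. rewrite Hqn. rewrite rpow_rpow by lra. replace (3/2 * (2/3)) with 1 by field.
    apply rpow_1; lra. }
  assert (Hnn0 : n < n0).
  { destruct (Rlt_le_dec n n0) as [h|h]; auto. exfalso.
    generalize (T_mono n0 n ltac:(lra) h ltac:(lra)). lra. }
  assert (Hn2 : 2 * n^2 < 1) by nra.
  assert (Ha : 2 * c / (1 + c * c) = (1 - n^2) / (1 + n^2)).
  { unfold n. field. split; nra. }
  replace (2 * c / (1 + w)) with ((1 - n^2) / (1 + n^2)) by (rewrite <- Hcw; symmetry; exact Ha).
  rewrite Phi_val by lra. rewrite Theta_val by apply rho_ge0.
  apply sin_val.
  - split. apply T_ge0. apply T_lt1. split. apply rho_ge0. apply rho_lt1; auto.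
  - rewrite doubling by lra. rewrite HTn. lra.
Qed.
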